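(* Let $\mathfrak g$ be a finite-dimensional complex reductive Lie algebra, $\mathfrak t\subset\mathfrak g$ a Cartan subalgebra and $\Phi_{\mathfrak g}=\Phi(\mathfrak g,\mathfrak t)\subset\mathfrak t^\vee$ its root system. Let $Q=\sum_{i=1}^p A_ix^i$ with $p\ge 1$, $A_i\in\mathfrak t$, and for $\alpha\in\Phi_{\mathfrak g}$ let $d_\alpha=\deg_x\bigl(\sum_{i=1}^p\alpha(A_i)x^i\bigr)\in\{0,\dots,p\}$ (with $\deg_x(0)=0$). Let $$\mathbf B_Q=\Bigl\{(A_1',\dots,A_p')\in\mathfrak t^p : \deg_x\Bigl(\sum_{i=1}^p\alpha(A_i')x^i\Bigr)=d_\alpha\ \text{for all }\alpha\in\Phi_{\mathfrak g}\Bigr\}\subset\mathfrak t^p.$$ Then $\mathbf B_Q=\prod_{i=1}^p\mathbf B_i\subset\mathfrak t^p$, where $$\mathbf B_i=\bigcap_{\alpha:\ d_\alpha<i}\operatorname{Ker}(\alpha)\ \cap\ \bigcap_{\alpha:\ d_\alpha=i}\bigl(\mathfrak t\setminus\operatorname{Ker}(\alpha)\bigr)\subset\mathfrak t$$ (an empty intersection being $\mathfrak t$).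
   Context: $Q$ is an (untwisted) irregular type written in the coordinate $x=z^{-1}$; $\mathbf B_Q$ is its universal space of admissible deformations of pole order at most $p$, identified with a subset of $\mathfrak t^p$ via $\sum_i A_i'x^i\mapsto(A_1',\dots,A_p')$. *)

(* Defs.v *)
From HB Require Import structures.
From mathcomp Require Import all_boot all_order all_algebra.
Set Implicit Arguments. Unset Strict Implicit. Unset Printing Implicit Defensive.
Import GRing.Theory.
Local Open Scope ring_scope.

(* The Cartan subalgebra t is modelled as the n-dimensional space 'rV[F]_n;
   a (root) functional alpha in t^vee is a column vector, evaluated by
   pairing.  An irregular type Q = sum_{i=1}^p A_i x^i is the family
   A : 'I_p -> t with A i standing for A_{i+1}. *)

Definition ev (F : fieldType) (n : nat) (alpha : 'cV[F]_n) (v : 'rV[F]_n) : F :=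
  (v *m alpha) 0 0.

Definition alpha_poly (F : fieldType) (n p : nat) (alpha : 'cV[F]_n)
    (A : 'I_p -> 'rV[F]_n) : {poly F} :=
  \sum_(i < p) ev alpha (A i) *: 'X^(i.+1).

Definition degx (F : fieldType) (q : {poly F}) : nat := (size q).-1.

Definition d_alpha (F : fieldType) (n p : nat) (A : 'I_p -> 'rV[F]_n)
    (alpha : 'cV[F]_n) : nat := degx (alpha_poly alpha A).

Definition in_BQ (F : fieldType) (n p : nat) (Phi : seq 'cV[F]_n)
    (A A' : 'I_p -> 'rV[F]_n) : Prop :=
  forall alpha, alpha \in Phi -> d_alpha A' alpha = d_alpha A alpha.

Definition in_Bi (F : fieldType) (n p : nat) (Phi : seq 'cV[F]_n)
    (A : 'I_p -> 'rV[F]_n) (i : nat) (v : 'rV[F]_n) : Prop :=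
  (forall alpha, alpha \in Phi -> (d_alpha A alpha < i)%N -> ev alpha v = 0) /\
  (forall alpha, alpha \in Phi -> d_alpha A alpha = i -> ev alpha v <> 0).

(* Main.v *)
Require Import Defs.
From HB Require Import structures.
From mathcomp Require Import all_boot all_order all_algebra.
Local Open Scope ring_scope.
Import GRing.Theory.

Lemma degx_char (F : fieldType) (P : {poly F}) (d : nat) :
  degx P = d <-> ((forall k, (d < k)%N -> P`_k = 0) /\ ((0 < d)%N -> P`_d != 0)).
Proof.
rewrite /degx; split.
  move=> <-; split.
    move=> k hk; apply: nth_default; by move: hk; case: (size P).
  move=> hd; have hP : P != 0.
    by apply/eqP=> h; move: hd; rewrite h size_poly0.
  by rewrite -lead_coefE lead_coef_eq0.
case=> h1 h2.
have hs : (size P <= d.+1)%N by apply/leq_sizeP => k hk; apply: h1.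
case: d h1 h2 hs => [|d] h1 h2 hs; first by move: hs; case: (size P) => [|[|]].
have : (d.+1 < size P)%N.
  rewrite ltnNge; apply/negP=> h; move: (h2 isT); rewrite nth_default ?eqxx //.
move=> h; have -> : size P = d.+2 by apply/eqP; rewrite eqn_leq hs h.
by [].
Qed.

Lemma coef_ap (F : fieldType) (p : nat) (c : 'I_p -> F) (k : nat) :
  (\sum_(i < p) c i *: 'X^(i.+1) : {poly F})`_k =
  \sum_(i < p) (if k == i.+1 then c i else 0).
Proof.
rewrite coef_sum; apply: eq_bigr => i _.
by rewrite coefZ coefXn; case: eqP; rewrite ?mulr1 ?mulr0.
Qed.

Lemma coef_ap_S (F : fieldType) (p : nat) (c : 'I_p -> F) (i : 'I_p) :
  (\sum_(j < p) c j *: 'X^(j.+1) : {poly F})`_i.+1 = c i.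
Proof.
rewrite coef_ap (bigD1 i) //= eqxx big1 ?addr0 // => j hj.
by case: eqP => // [[h]]; move: hj; rewrite -val_eqE /= h eqxx.
Qed.

Lemma coef_ap_out (F : fieldType) (p : nat) (c : 'I_p -> F) (k : nat) :
  (k == 0)%N || (p < k)%N ->
  (\sum_(j < p) c j *: 'X^(j.+1) : {poly F})`_k = 0.
Proof.
move=> hk; rewrite coef_ap big1 // => j _; case: eqP => // e.
by move: hk; rewrite e /= ltnNge ltn_ord.
Qed.

Theorem proposition2p6 (F : fieldType) (n p : nat) (Phi : seq 'cV[F]_n)
    (A : 'I_p -> 'rV[F]_n) :
  (0 < p)%N ->
  forall A' : 'I_p -> 'rV[F]_n,
    in_BQ Phi A A' <-> (forall i : 'I_p, in_Bi Phi A i.+1 (A' i)).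
Proof.
move=> hp A'; rewrite /in_BQ /in_Bi; split.
  move=> H i; split.
    move=> alpha ha hd; have [h1 _] := (@degx_char F (alpha_poly alpha A') _).1 (H alpha ha).
    by move: (h1 _ hd); rewrite /alpha_poly coef_ap_S.
  move=> alpha ha hd; have [_ h2] := (@degx_char F (alpha_poly alpha A') _).1 (H alpha ha).
  by move: (h2 ltac:(by rewrite hd)); rewrite hd /alpha_poly coef_ap_S => /eqP.
move=> H alpha ha; apply/degx_char; set d := d_alpha A alpha; split.
  move=> k hk; case: k hk => [|k] hk; first by rewrite coef_ap_out.
  case: (ltnP k p) => hkp.
    by rewrite /alpha_poly (@coef_ap_S _ _ _ (Ordinal hkp)); apply: (H (Ordinal hkp)).1.
  by rewrite coef_ap_out // orbC ltnS hkp.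
move=> hd.
have hdp : (d.-1 < p)%N.
  rewrite prednK //; rewrite /d /d_alpha /degx.
  have : (size (alpha_poly alpha A) <= p.+1)%N.
    by apply/leq_sizeP => k hk; rewrite coef_ap_out // orbC hk.
  by case: (size _) => //= m; rewrite ltnS.
have e : d = (Ordinal hdp).+1 by rewrite /= prednK.
rewrite e /alpha_poly coef_ap_S; apply/eqP; apply: (H (Ordinal hdp)).2 => //.
Qed.
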